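(* Let $\mathcal{W}=\{1,\ldots,n\}$ be a finite vocabulary, let $\#(i,j)\ge 0$ be co-occurrence counts for $i,j\in\mathcal{W}$ with $\#(i,j)>0$ for all $i,j$, let $N=\sum_{i,j\in\mathcal{W}}\#(i,j)$, $\#(i)=\sum_{j\in\mathcal{W}}\#(i,j)$, $p(i,j)=\#(i,j)/N$, $p(i)=\#(i)/N$, and let $k>0$ be the number of negative samples. Suppose $\mathbf{w}_i,\mathbf{c}_j\in\mathbb{R}^d$ satisfy $0<\langle\mathbf{w}_i,\mathbf{c}_j\rangle<1$ for all $i,j$. Consider the objective $$\mathcal{L}=\sum_{i\in\mathcal{W}}\sum_{j\in\mathcal{W}}\#(i,j)\Big(\log\langle\mathbf{w}_i,\mathbf{c}_j\rangle+k\cdot\mathbb{E}_{j'\sim P}\big[\log(1-\langle\mathbf{w}_i,\mathbf{c}_{j'}\rangle)\big]\Big),$$ where $P$ is the unigram distribution $P(j')=p(j')$. Then, viewing $\mathcal{L}$ as a function of the quantities $x_{ij}=\langle\mathbf{w}_i,\mathbf{c}_j\rangle\in(0,1)$ treated as independent variables, $\mathcal{L}$ reaches its optimum (maximum) at $$\langle\mathbf{w}_i,\mathbf{c}_j\rangle=\sigma\Big(\log\frac{p(i,j)}{p(i)p(j)}-\log k\Big)\quad\text{for all } i,j\in\mathcal{W},$$ where $\sigma(x)=\frac{1}{1+e^{-x}}$ is the logistic sigmoid.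
   Context: The quantity $\mathrm{PMI}_{ij}=\log\frac{p(i,j)}{p(i)p(j)}$ is the pointwise mutual information, and $\sigma\mathrm{SPMI}_{ij}:=\sigma(\mathrm{PMI}_{ij}-\log k)$ is called the squashed shifted PMI matrix. Co-occurrence counts $\#(i,j)$ count how often words $i$ and $j$ appear together within a fixed-size context window of a corpus. *)

(* Defs.v *)
From HB Require Import structures.
From mathcomp Require Import all_boot all_order all_algebra.
From mathcomp Require Import all_classical all_reals all_analysis.
Set Implicit Arguments. Unset Strict Implicit. Unset Printing Implicit Defensive.
Import Order.TTheory GRing.Theory Num.Theory.
Local Open Scope ring_scope.

Definition sigmoid {R : realType} (x : R) : R := 1 / (1 + expR (- x)).

Section Defs.
Context {R : realType} {n : nat}.
Variable cnt : 'I_n -> 'I_n -> nat.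

Definition Ntot : R := \sum_(i < n) \sum_(j < n) (cnt i j)%:R.
Definition marg (i : 'I_n) : R := \sum_(j < n) (cnt i j)%:R.
Definition pjoint (i j : 'I_n) : R := (cnt i j)%:R / Ntot.
Definition pmarg (i : 'I_n) : R := marg i / Ntot.
Definition PMI (i j : 'I_n) : R := ln (pjoint i j / (pmarg i * pmarg j)).

(* The SGNS objective as a function of x_ij = <w_i, c_j>, with the
   expectation over the unigram distribution P(j') = p(j') written out. *)
Definition Lobj (k : R) (x : 'I_n -> 'I_n -> R) : R :=
  \sum_(i < n) \sum_(j < n) (cnt i j)%:R *
    (ln (x i j) + k * \sum_(j' < n) pmarg j' * ln (1 - x i j')).
End Defs.

(* Main.v *)
Require Import Defs.
From HB Require Import structures.
From mathcomp Require Import all_boot all_order all_algebra.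
From mathcomp Require Import all_classical all_reals all_analysis.
From mathcomp Require Import ring lra.
Import Order.TTheory GRing.Theory Num.Theory.
Local Open Scope ring_scope.

Lemma ln_sub_le (R : realType) (u v : R) : 0 < u -> 0 < v -> ln u - ln v <= u / v - 1.
Proof.
move=> hu hv; rewrite -ln_div ?posrE //.
have e : 1 + (u / v - 1) = u / v by ring.
have h := @le_ln1Dx R (u / v - 1); rewrite e in h; apply: h.
have := divr_gt0 hu hv; lra.
Qed.

Lemma key (R : realType) (a b x : R) : 0 < a -> 0 < b -> 0 < x < 1 ->
  a * ln x + b * ln (1 - x) <= a * ln (a / (a + b)) + b * ln (1 - a / (a + b)).
Proof.
move=> ha hb /andP[hx0 hx1].
have hab : 0 < a + b by lra.
have hs : 0 < a / (a + b) by exact: divr_gt0.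
have e1 : 1 - a / (a + b) = b / (a + b) by field; lra.
rewrite e1.
have hs' : 0 < b / (a + b) by exact: divr_gt0.
have h1 := @ln_sub_le R _ _ hx0 hs.
have h2 : ln (1 - x) - ln (b / (a + b)) <= (1 - x) / (b / (a + b)) - 1.
  apply: ln_sub_le => //; lra.
have h1' := ler_wpM2l (ltW ha) h1.
have h2' := ler_wpM2l (ltW hb) h2.
have E : a * (x / (a / (a + b)) - 1) + b * ((1 - x) / (b / (a + b)) - 1) = 0.
  by field; rewrite ?gt_eqF //; lra.
rewrite !mulrBr in h1' h2'.
lra.
Qed.

Lemma Lobj_eq (R : realType) (n : nat) (cnt : 'I_n -> 'I_n -> nat) (k : R) x :
  Lobj cnt k x = \sum_(i < n) \sum_(j < n) ((cnt i j)%:R * ln (x i j) +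
     (k * marg cnt i * pmarg cnt j) * ln (1 - x i j)).
Proof.
rewrite /Lobj; apply: eq_bigr => i _.
under eq_bigr do rewrite mulrDr.
rewrite !big_split /=; congr (_ + _).
rewrite -big_distrl /= mulrA big_distrr /=.
apply: eq_bigr => j _; rewrite /marg; ring.
Qed.

Theorem theorem1 (R : realType) (n : nat) (cnt : 'I_n -> 'I_n -> nat) (k : R)
  (hk : 0 < k) (hcnt : forall i j : 'I_n, (0 < cnt i j)%N) :
  let xs := fun i j : 'I_n => sigmoid (PMI cnt i j - ln k) in
  (forall i j : 'I_n, 0 < xs i j < 1) /\
  (forall x : 'I_n -> 'I_n -> R, (forall i j : 'I_n, 0 < x i j < 1) ->
     Lobj cnt k x <= Lobj cnt k xs).
Proof.
move=> xs.
have cpos i j : 0 < (cnt i j)%:R :> R by rewrite ltr0n.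
have mpos i : 0 < marg cnt i :> R.
  rewrite /marg (bigD1 i) //=; have := cpos i i.
  have : 0 <= \sum_(j < n | j != i) (cnt i j)%:R :> R.
    by apply: sumr_ge0 => *; exact: ler0n.
  lra.
have Npos (i : 'I_n) : 0 < Ntot cnt :> R.
  rewrite /Ntot (bigD1 i) //=; have := mpos i.
  have : 0 <= \sum_(j < n | j != i) marg cnt j :> R.
    by apply: sumr_ge0 => j _; exact: ltW (mpos j).
  rewrite /marg; lra.
have pmpos i : 0 < pmarg cnt i :> R by rewrite /pmarg divr_gt0 // (Npos i).
have bpos i j : 0 < k * marg cnt i * pmarg cnt j :> R by apply: mulr_gt0; [apply: mulr_gt0 => //; exact: mpos | exact: pmpos].
have xsE i j : xs i j = (cnt i j)%:R / ((cnt i j)%:R + k * marg cnt i * pmarg cnt j).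
  have qpos : 0 < pjoint cnt i j / (pmarg cnt i * pmarg cnt j) :> R.
    by apply: divr_gt0; [rewrite /pjoint divr_gt0 // (Npos i) | exact: mulr_gt0].
  rewrite /xs /sigmoid /PMI opprB expRB lnK ?posrE // lnK ?posrE //.
  move: qpos; rewrite /pjoint /pmarg => qpos.
  have := Npos i; have := mpos i; have := mpos j; have := cpos i j.
  move=> h1 h2 h3 h4.
  field; rewrite !gt_eqF // addr_gt0 // ?mulr_gt0 //.
split.
  move=> i j; rewrite xsE; have := cpos i j; have := bpos i j => h1 h2.
  apply/andP; split; first by rewrite divr_gt0 ?addr_gt0.
  by rewrite ltr_pdivrMr ?addr_gt0 // mul1r ltrDl.
move=> x hx; rewrite !Lobj_eq; apply: ler_sum => i _; apply: ler_sum => j _.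
rewrite xsE; exact: key.
Qed.
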